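(* Let $d\ge 3$ and let $\mathfrak M$ be a model of $\mathsf{SpecRel}_d$. Then for all inertial observers $m,k\in\mathrm{IOb}$ and all events $e_1,e_2\in Ev_m$, $$\mathsf{time}_m(e_1,e_2)^2-\mathsf{dist}_m(e_1,e_2)^2=\mathsf{time}_k(e_1,e_2)^2-\mathsf{dist}_k(e_1,e_2)^2 .$$
   Context: Fix a natural number $d\ge 2$. Models are first-order structures $\mathfrak M=\langle U;\mathrm B,\mathrm{Ob},\mathrm{IOb},\mathrm{Ph},\mathrm Q,+,\cdot,\le,\mathrm W\rangle$, where $\mathrm B,\mathrm{Ob},\mathrm{IOb},\mathrm{Ph},\mathrm Q$ are unary relations (subsets of $U$: bodies, observers, inertial observers, photons, quantities), $+,\cdot$ are binary function symbols, $\le$ a binary relation symbol, and $\mathrm W$ a $(2+d)$-ary relation; $\mathrm W(m,b,\vec p)$ is read ''observer $m$ coordinatizes body $b$ at coordinate point $\vec p\in\mathrm Q^d$''. For $\vec p=\langle p_1,\dots,p_d\rangle\in\mathrm Q^d$ write $p_t:=p_1$ (time component), $\vec p_s:=\langle p_2,\dots,p_d\rangle$ (space component), $|\vec p|:=\sqrt{p_1^2+\dots+p_n^2}$ for $\vec p\in \mathrm Q^n$ (Euclidean length); $\mathrm Q^d$ carries its vector-space operations and $\vec o$ is the origin. Define $ev_m(\vec p):=\{b\in\mathrm B:\mathrm W(m,b,\vec p)\}$, $Cd_m:=\{\vec p\in\mathrm Q^d: ev_m(\vec p)\neq\emptyset\}$, $Ev_m:=\{ev_m(\vec p):\vec p\in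 Cd_m\}$, $Ev:=\bigcup_{m\in\mathrm{Ob}}Ev_m$. $Crd_m(e)$ denotes the unique $\vec p\in Cd_m$ with $ev_m(\vec p)=e$; any statement involving $Crd_m(e)$ (or the notions below built from it) tacitly asserts that such a unique $\vec p$ exists. $\mathsf{time}_m(e_1,e_2):=|Crd_m(e_1)_t-Crd_m(e_2)_t|$, $\mathsf{dist}_m(e_1,e_2):=|Crd_m(e_1)_s-Crd_m(e_2)_s|$, and $e_1\sim_m e_2$ (simultaneous for $m$) iff $Crd_m(e_1)_t=Crd_m(e_2)_t$. $\mathsf{SpecRel}_d$ consists of the axioms: AxFrame: $\mathrm{Ob}\cup\mathrm{Ph}\subseteq\mathrm B$, $\mathrm{IOb}\subseteq\mathrm{Ob}$, $U=\mathrm B\cup\mathrm Q$, $\mathrm B\cap\mathrm Q=\emptyset$, $\mathrm W\subseteq\mathrm{Ob}\times\mathrm B\times\mathrm Q^d$, $+,\cdot$ are binary operations on $\mathrm Q$ and $\le$ is a binary relation on $\mathrm Q$. AxEOF: $\langle\mathrm Q;+,\cdot,\le\rangle$ is a Euclidean ordered field (a linearly ordered field in which every positive element has a square root). AxSelf$^-$: $\forall m\in\mathrm{Ob}\ \forall\vec p\in Cd_m\ (m\in ev_m(\vec p)\iff \vec p_s=\vec o)$. AxPh$_0$: $\forall m\in\mathrm{IOb}\ \forall\vec p,\vec q\in\mathrm Q^d\ (|\vec p_s-\vec q_s|=|p_t-q_t|\iff \mathrm{Ph}\cap ev_m(\vec p)\cap ev_m(\vec q)\neq\emptyset)$. AxEv: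 $\forall m,k\in\mathrm{IOb}\ Ev_m=Ev_k$. AxSimDist: $\forall m,k\in\mathrm{IOb}\ \forall e_1,e_2\in Ev_m\ (e_1\sim_m e_2\wedge e_1\sim_k e_2\Rightarrow \mathsf{dist}_m(e_1,e_2)=\mathsf{dist}_k(e_1,e_2))$. *)

(* Defs.v *)
(* Models of SpecRel_d, rendered two-sorted:
   quantities = carrier of a realFieldType R, bodies = a type B. *)
From mathcomp Require Import all_boot all_order all_algebra.
From Stdlib Require Import ClassicalEpsilon.
Set Implicit Arguments. Unset Strict Implicit. Unset Printing Implicit Defensive.
Import Order.TTheory GRing.Theory Num.Theory.
Local Open Scope ring_scope.

Section Geometry.
Variables (R : realFieldType) (d : nat).

(* the non-negative square root (meaningful whenever it exists, e.g. under AxEOF) *)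
Definition esqrt (x : R) : R :=
  epsilon (inhabits 0) (fun y => 0 <= y /\ y * y = x).

(* coordinate points are row vectors in Q^d; index 0 is the time coordinate p_1 *)
Definition tcomp (p : 'rV[R]_d) : R := \sum_(i < d | val i == 0%N) p 0 i.

Definition sdist (p q : 'rV[R]_d) : R :=
  esqrt (\sum_(i < d | val i != 0%N) (p 0 i - q 0 i) ^+ 2).

Definition space_zero (p : 'rV[R]_d) : Prop :=
  forall i : 'I_d, val i != 0%N -> p 0 i = 0.

Definition tdist (p q : 'rV[R]_d) : R := `|tcomp p - tcomp q|.
End Geometry.

Section Model.
Variables (R : realFieldType) (d : nat) (B : Type)
  (Ob IOb Ph : B -> Prop) (W : B -> B -> 'rV[R]_d -> Prop).

Definition ev (m : B) (p : 'rV[R]_d) : B -> Prop := fun b => W m b p.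
Definition Cd (m : B) (p : 'rV[R]_d) : Prop := exists b, W m b p.
Definition InEv (m : B) (e : B -> Prop) : Prop := exists2 p, Cd m p & ev m p = e.

Definition IsCrd (m : B) (e : B -> Prop) (p : 'rV[R]_d) : Prop :=
  [/\ Cd m p, ev m p = e & forall q, Cd m q -> ev m q = e -> q = p].

Definition AxFrame : Prop :=
  (forall m, IOb m -> Ob m) /\ (forall m b p, W m b p -> Ob m).

Definition AxEOF : Prop := forall x : R, 0 < x -> exists y : R, y * y = x.

Definition AxSelf : Prop :=
  forall m, Ob m -> forall p, Cd m p -> (W m m p <-> space_zero p).

Definition AxPh0 : Prop :=
  forall m, IOb m -> forall p q : 'rV[R]_d,
    (sdist p q = tdist p q <-> exists b, [/\ Ph b, W m b p & W m b q]).

Definition AxEv : Prop :=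
  forall m k, IOb m -> IOb k -> forall e, InEv m e <-> InEv k e.

(* the tacit existence/uniqueness of the coordinates is made explicit via IsCrd *)
Definition AxSimDist : Prop :=
  forall m k, IOb m -> IOb k -> forall e1 e2, InEv m e1 -> InEv m e2 ->
  forall p1 p2 q1 q2, IsCrd m e1 p1 -> IsCrd m e2 p2 ->
    IsCrd k e1 q1 -> IsCrd k e2 q2 ->
    tcomp p1 = tcomp p2 -> tcomp q1 = tcomp q2 -> sdist p1 p2 = sdist q1 q2.

Definition SpecRel : Prop :=
  [/\ AxFrame, AxEOF, AxSelf, AxPh0 & (AxEv /\ AxSimDist)].
End Model.

(* Main.v *)
Require Import Defs.
From mathcomp Require Import all_boot all_order all_algebra.
From mathcomp Require Import ring lra.
From Stdlib Require Import ClassicalEpsilon.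
Set Implicit Arguments. Unset Strict Implicit. Unset Printing Implicit Defensive.
Import Order.TTheory GRing.Theory Num.Theory.
Local Open Scope ring_scope.

Section Mink.
Variables (R : realFieldType) (n : nat).
Local Notation D := n.+3.
Local Notation V := 'rV[R]_D.

Definition ip (u v : V) : R :=
  u 0 ord0 * v 0 ord0 - \sum_(i | i != ord0) u 0 i * v 0 i.
Definition Q (u : V) := ip u u.

Lemma ipC u v : ip u v = ip v u.
Proof. by rewrite /ip mulrC; congr (_ - _); apply: eq_bigr => i _; rewrite mulrC. Qed.

Lemma ipDl u v w : ip (u + v) w = ip u w + ip v w.
Proof.
rewrite /ip !mxE mulrDl.
have -> : \sum_(i | i != ord0) (u + v) 0 i * w 0 i =
   \sum_(i | i != ord0) u 0 i * w 0 i + \sum_(i | i != ord0) v 0 i * w 0 i.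
  by rewrite -big_split; apply: eq_bigr => i _; rewrite !mxE mulrDl.
by ring.
Qed.

Lemma ipZl a u w : ip (a *: u) w = a * ip u w.
Proof.
rewrite /ip !mxE mulrBr mulr_sumr -mulrA; congr (_ - _).
by apply: eq_bigr => i _; rewrite !mxE mulrA.
Qed.

Lemma ipDr u v w : ip w (u + v) = ip w u + ip w v.
Proof. by rewrite ipC ipDl !(ipC w). Qed.
Lemma ipZr a u w : ip w (a *: u) = a * ip w u.
Proof. by rewrite ipC ipZl ipC. Qed.
Lemma ipNl u w : ip (- u) w = - ip u w.
Proof. by rewrite -scaleN1r ipZl mulN1r. Qed.
Lemma ipNr u w : ip w (- u) = - ip w u.
Proof. by rewrite ipC ipNl ipC. Qed.
Lemma ipBl u v w : ip (u - v) w = ip u w - ip v w.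
Proof. by rewrite ipDl ipNl. Qed.
Lemma ipBr u v w : ip w (u - v) = ip w u - ip w v.
Proof. by rewrite ipDr ipNr. Qed.
Lemma ip0l w : ip 0 w = 0.
Proof. by rewrite -(scale0r 0) ipZl mul0r. Qed.
Lemma ip0r w : ip w 0 = 0.
Proof. by rewrite ipC ip0l. Qed.

Lemma QD u v : Q (u + v) = Q u + Q v + 2 * ip u v.
Proof. rewrite /Q ipDl !ipDr (ipC v u); ring. Qed.
Lemma QB u v : Q (u - v) = Q u + Q v - 2 * ip u v.
Proof. rewrite /Q ipBl !ipBr (ipC v u); ring. Qed.
Lemma QZ a u : Q (a *: u) = a ^+ 2 * Q u.
Proof. rewrite /Q ipZl ipZr; ring. Qed.
Lemma QN u : Q (- u) = Q u.
Proof. by rewrite /Q ipNl ipNr opprK. Qed.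


Lemma sumsq0 (f : 'I_D -> R) :
  \sum_(i | i != ord0) f i * f i = 0 -> forall i, i != ord0 -> f i = 0.
Proof.
move=> hs i hi.
have H : forall j, j != ord0 -> 0 <= f j * f j.
  by move=> j _; rewrite -expr2 sqr_ge0.
have E := @psumr_eq0P _ _ (fun i => i != ord0) (fun i => f i * f i) H hs i hi.
by move: E => /= /eqP; rewrite mulf_eq0 orbb => /eqP.
Qed.

Lemma null_t0 (v : V) : Q v = 0 -> v 0 ord0 = 0 -> v = 0.
Proof.
move=> hQ h0.
have hs : \sum_(i | i != ord0) v 0 i * v 0 i = 0.
  by move: hQ; rewrite /Q /ip h0 mul0r sub0r => /eqP; rewrite oppr_eq0 => /eqP.
apply/rowP => i; rewrite mxE.
case: (eqVneq i ord0) => [->//|hi].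
exact: (sumsq0 hs hi).
Qed.

Lemma LL (v m : V) : Q v = 0 -> Q m = 0 -> ip v m = 0 -> m != 0 ->
  exists s, v = s *: m.
Proof.
move=> hv hm hvm m0.
set a := v 0 ord0; set b := m 0 ord0.
have hb : b != 0.
  apply: contra m0 => /eqP hb; apply/eqP; exact: null_t0.
have Svv : \sum_(i | i != ord0) v 0 i * v 0 i = a * a.
  by move: hv; rewrite /Q /ip -/a => /eqP; rewrite subr_eq0 => /eqP.
have Smm : \sum_(i | i != ord0) m 0 i * m 0 i = b * b.
  by move: hm; rewrite /Q /ip -/b => /eqP; rewrite subr_eq0 => /eqP.
have Svm : \sum_(i | i != ord0) v 0 i * m 0 i = a * b.
  by move: hvm; rewrite /ip -/a -/b => /eqP; rewrite subr_eq0 => /eqP.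
have H : \sum_(i | i != ord0) (v 0 i * b - a * m 0 i) * (v 0 i * b - a * m 0 i) = 0.
  have -> : \sum_(i | i != ord0) (v 0 i * b - a * m 0 i) * (v 0 i * b - a * m 0 i)
    = (b * b) * \sum_(i | i != ord0) v 0 i * v 0 i
      - (2 * a * b) * \sum_(i | i != ord0) v 0 i * m 0 i
      + (a * a) * \sum_(i | i != ord0) m 0 i * m 0 i.
    rewrite !mulr_sumr -sumrB -big_split /=; apply: eq_bigr => i _; ring.
  rewrite Svv Smm Svm; ring.
exists (a / b); apply/rowP => i; rewrite mxE.
case: (eqVneq i ord0) => [->|hi].
  by rewrite -/a -/b mulfVK.
have := sumsq0 H hi; move/eqP; rewrite subr_eq0 => /eqP E.
by apply: (mulIf hb); rewrite E mulrAC mulfVK // mulrC.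
Qed.

Lemma Q2 a b x y : Q (a *: x + b *: y) = a ^+ 2 * Q x + b ^+ 2 * Q y + 2 * (a * b) * ip x y.
Proof. rewrite QD !QZ ipZl ipZr; ring. Qed.

Lemma Q3 a b c x y z : Q (a *: x + b *: y + c *: z) =
  a ^+ 2 * Q x + b ^+ 2 * Q y + c ^+ 2 * Q z + 2 * (a * b) * ip x y
  + 2 * (a * c) * ip x z + 2 * (b * c) * ip y z.
Proof. rewrite QD Q2 QZ !ipDl !ipZl !ipZr; ring. Qed.

Definition lam (p q : V) := Q (p - q) = 0.
Definition onl (z p q : V) := lam z p /\ lam z q.
Definition Blind (p1 q1 p2 q2 : V) :=
  exists z, onl z p1 q1 /\ forall y, onl y p2 q2 -> ~ lam z y.

Lemma lamC p q : lam p q -> lam q p.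
Proof. by rewrite /lam -opprB QN. Qed.

Lemma line_pt X N y : Q N = 0 -> N != 0 -> lam y X -> lam y (X + N) ->
  exists s, y = X + s *: N.
Proof.
move=> hN N0 h1 h2.
have h3 : ip (y - X) N = 0.
  move: h2; rewrite /lam.
  have -> : y - (X + N) = (y - X) - N by apply/rowP=> i; rewrite !mxE; ring.
  rewrite QB hN h1 => E; lra.
have [s hs] := LL h1 hN h3 N0.
by exists s; rewrite -hs addrC subrK.
Qed.

Lemma half X N1 N2 B : Q N1 = 0 -> Q N2 = 0 -> ip N2 N1 != 0 ->
  lam B (X + N1) -> lam B (X + N2) -> B != X ->
  ~ Blind (X + N2) B X (X + N1) -> exists t, B = X + N2 + t *: N1.
Proof.
move=> h1 h2 hb hB1 hB2 hBX hnb.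
set m := B - (X + N2).
have Bm : B = X + N2 + m by rewrite /m addrC subrK.
have hm : Q m = 0 by exact: hB2.
have N10 : N1 != 0 by apply: contraNneq hb => ->; rewrite ip0r.
have N20 : N2 != 0 by apply: contraNneq hb => ->; rewrite ip0l.
case: (eqVneq (ip m N1) 0) => hg.
  by have [s hs] := LL hm h1 hg N10; exists s; rewrite Bm hs.
exfalso.
case: (eqVneq (ip N2 m) 0) => ha.
  have [s hs] := LL hm h2 (etrans (ipC _ _) ha) N20.
  move: hB1; rewrite /lam.
  have -> : B - (X + N1) = (1 + s) *: N2 + (-1) *: N1.
    by rewrite Bm hs; apply/rowP=> i; rewrite !mxE; ring.
  rewrite Q2 h1 h2 => E.
  have E2 : (1 + s) * ip N2 N1 = 0 by lra.
  move: E2 => /eqP; rewrite mulf_eq0 (negbTE hb) orbF => /eqP hs1.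
  move/eqP: hBX => hBX; apply: hBX; rewrite Bm hs.
  apply/rowP=> i; rewrite !mxE; have -> : s = -1 by lra.
  ring.
apply: hnb.
set u := - ip N2 N1 / ip m N1.
have hu : ip N2 N1 + u * ip m N1 = 0 by rewrite /u; field.
have u0 : u != 0 by rewrite /u mulf_eq0 negb_or oppr_eq0 hb invr_eq0 hg.
exists (X + N2 + u *: m); split.
  split; rewrite /lam.
    have -> : X + N2 + u *: m - (X + N2) = u *: m by apply/rowP=> i; rewrite !mxE; ring.
    by rewrite QZ hm mulr0.
  have -> : X + N2 + u *: m - B = (u - 1) *: m by rewrite Bm; apply/rowP=> i; rewrite !mxE; ring.
  by rewrite QZ hm mulr0.
move=> y [hy1 hy2].
have [s ->] := line_pt h1 N10 hy1 hy2.
rewrite /lam.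
have -> : X + N2 + u *: m - (X + s *: N1) = 1 *: N2 + u *: m + (- s) *: N1.
  by apply/rowP=> i; rewrite !mxE; ring.
rewrite Q3 h1 h2 hm (ipC N2 N1) (ipC m N1) => E.
have E2 : u * ip N2 m = 0.
  have : 2 * (u * ip N2 m) - 2 * s * (ip N1 N2 + u * ip N1 m) = 0 by rewrite -E; ring.
  by rewrite (ipC N1 N2) (ipC N1 m) hu mulr0 => H; lra.
by move: E2 => /eqP; rewrite mulf_eq0 (negbTE u0) (negbTE ha).
Qed.

Lemma uniq4 X N1 N2 B : Q N1 = 0 -> Q N2 = 0 -> ip N2 N1 != 0 ->
  lam B (X + N1) -> lam B (X + N2) -> B != X ->
  ~ Blind (X + N2) B X (X + N1) -> ~ Blind (X + N1) B X (X + N2) ->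
  B = X + N1 + N2.
Proof.
move=> h1 h2 hb hB1 hB2 hBX nb1 nb2.
have [t ht] := half h1 h2 hb hB1 hB2 hBX nb1.
have hb' : ip N1 N2 != 0 by rewrite ipC.
have [t' ht'] := half h2 h1 hb' hB2 hB1 hBX nb2.
have E : (t - 1) *: N1 = (t' - 1) *: N2.
  by apply/rowP=> i; move/rowP: (etrans (esym ht) ht') => /(_ i); rewrite !mxE => H; lra.
have : ip ((t - 1) *: N1) N2 = ip ((t' - 1) *: N2) N2 by rewrite E.
rewrite !ipZl -/(Q N2) h2 mulr0 => /eqP; rewrite mulf_eq0 (negbTE hb') orbF subr_eq0 => /eqP ht1.
by rewrite ht ht1; apply/rowP=> i; rewrite !mxE; ring.
Qed.

Lemma notBlind_src x n1 n2 : Q n1 = 0 -> Q n2 = 0 -> ip n1 n2 != 0 ->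
  ~ Blind (x + n2) (x + n1 + n2) x (x + n1).
Proof.
move=> h1 h2 hb [z [[hz1 hz2] H]].
have n10 : n1 != 0 by apply: contraNneq hb => ->; rewrite ip0l.
have hz2' : lam z (x + n2 + n1) by move: hz2; rewrite -addrA (addrC n1) addrA.
have [s hs] := line_pt h1 n10 hz1 hz2'.
apply: (H (x + s *: n1)).
  split; rewrite /lam.
    have -> : x + s *: n1 - x = s *: n1 by apply/rowP=> i; rewrite !mxE; ring.
    by rewrite QZ h1 mulr0.
  have -> : x + s *: n1 - (x + n1) = (s - 1) *: n1 by apply/rowP=> i; rewrite !mxE; ring.
  by rewrite QZ h1 mulr0.
rewrite /lam hs.
have -> : x + n2 + s *: n1 - (x + s *: n1) = n2 by apply/rowP=> i; rewrite !mxE; ring.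
exact: h2.
Qed.

Definition e (i : 'I_D) : V := delta_mx 0 i.
Definition o1 : 'I_D := Ordinal (isT : (1 < n.+3)%N).
Definition o2 : 'I_D := Ordinal (isT : (2 < n.+3)%N).
Definition nul (k : 'I_D) (eps : R) : V := e ord0 + eps *: e k.

Lemma eE i j : e j 0 i = (i == j)%:R.
Proof. by rewrite mxE eqxx. Qed.

Lemma ipe u j : ip u (e j) = if j == ord0 then u 0 ord0 else - u 0 j.
Proof.
rewrite /ip eE.
case: (eqVneq j ord0) => [->|hj].
  rewrite /= mulr1n mulr1 big1 ?subr0 // => i hi; by rewrite eE (negbTE hi) mulr0.
rewrite /= mulr0n mulr0 sub0r (bigD1 j) //= eE eqxx mulr1 big1 ?addr0 //.
by move=> i /andP[_ hi]; rewrite eE (negbTE hi) mulr0.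
Qed.

Lemma ip_ee i j : ip (e i) (e j) =
  if j == ord0 then (ord0 == i)%:R else - (j == i)%:R.
Proof. by rewrite ipe !eE. Qed.

Lemma ip_nul k i a b : k != ord0 -> i != ord0 ->
  ip (nul k a) (nul i b) = 1 - a * b * (i == k)%:R.
Proof.
move=> hk hi; rewrite /nul !ipDl !ipDr !ipZl !ipZr !ip_ee !eqxx (negbTE hi) (eq_sym ord0 k) (negbTE hk) /= mulr1n mulr0n.
ring.
Qed.

Lemma Q_nul k a : k != ord0 -> a = 1 \/ a = -1 -> Q (nul k a) = 0.
Proof.
move=> hk ha; rewrite /Q ip_nul // eqxx.
by case: ha => ->; rewrite /= mulr1n; ring.
Qed.

Lemma span_ind (P : V -> Prop) : P 0 -> (forall u v, P u -> P v -> P (u + v)) ->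
  (forall a i, P (a *: e i)) -> forall v, P v.
Proof.
move=> P0 PD Pe v; rewrite (row_sum_delta v).
by apply: big_ind => // i _; apply: Pe.
Qed.

Section Wmap.
Variable w : V -> V.
Hypothesis wlam : forall p q, lam p q <-> lam (w p) (w q).
Hypothesis wsurj : forall y, exists x, w x = y.
Hypothesis winj : injective w.

Lemma Blind_tr p1 q1 p2 q2 : Blind (w p1) (w q1) (w p2) (w q2) -> Blind p1 q1 p2 q2.
Proof.
move=> [Z [[hz1 hz2] H]].
have [z hz] := wsurj Z; subst Z.
exists z; split; first by split; apply/wlam.
move=> y [hy1 hy2] hzy.
apply: (H (w y)); first split. exact: ((wlam _ _).1 hy1). exact: ((wlam _ _).1 hy2). exact: ((wlam _ _).1 hzy).
Qed.

Lemma Par x n1 n2 : Q n1 = 0 -> Q n2 = 0 -> ip n1 n2 != 0 ->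
  w (x + n1 + n2) = w (x + n1) + w (x + n2) - w x.
Proof.
move=> h1 h2 h12.
set X := w x; set N1 := w (x + n1) - X; set N2 := w (x + n2) - X.
have E1 : X + N1 = w (x + n1) by rewrite /N1 addrC subrK.
have E2 : X + N2 = w (x + n2) by rewrite /N2 addrC subrK.
have hN1 : Q N1 = 0.
  have : lam (x + n1) x by rewrite /lam addrC addKr.
  by move/(wlam (x + n1) x); rewrite /lam -E1 -/X addrC addKr.
have hN2 : Q N2 = 0.
  have : lam (x + n2) x by rewrite /lam addrC addKr.
  by move/(wlam (x + n2) x); rewrite /lam -E2 -/X addrC addKr.
have hb : ip N2 N1 != 0.
  apply/negP => /eqP hb.
  have : lam (w (x + n1)) (w (x + n2)).
    rewrite /lam -E1 -E2.
    have -> : X + N1 - (X + N2) = N1 - N2 by apply/rowP=> i; rewrite !mxE; ring.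
    by rewrite QB hN1 hN2 ipC hb; ring.
  move/(wlam (x + n1) (x + n2)); rewrite /lam.
  have -> : x + n1 - (x + n2) = n1 - n2 by apply/rowP=> i; rewrite !mxE; ring.
  rewrite QB h1 h2 => E.
  by move/eqP: h12; apply; lra.
have HB := @uniq4 X N1 N2 (w (x + n1 + n2)) hN1 hN2 hb.
rewrite HB.
- by rewrite /N1 /N2; apply/rowP=> i; rewrite !mxE; ring.
- rewrite E1; apply/(wlam (x + n1 + n2) (x + n1)); rewrite /lam.
  by have -> : x + n1 + n2 - (x + n1) = n2 by apply/rowP=> i; rewrite !mxE; ring.
- rewrite E2; apply/(wlam (x + n1 + n2) (x + n2)); rewrite /lam.
  by have -> : x + n1 + n2 - (x + n2) = n1 by apply/rowP=> i; rewrite !mxE; ring.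
- apply/negP => /eqP /winj E.
  have : Q (n1 + n2) = 0.
    have -> : n1 + n2 = x + n1 + n2 - x by apply/rowP=> i; rewrite !mxE; ring.
    by rewrite E subrr /Q ip0l.
  rewrite QD h1 h2 => E'.
  by move/eqP: h12; apply; lra.
- rewrite E1 E2 => /Blind_tr.
  exact: notBlind_src.
- rewrite E1 E2 => /Blind_tr.
  have -> : x + n1 + n2 = x + n2 + n1 by rewrite -!addrA (addrC n1).
  by apply: notBlind_src; rewrite // ipC.
Qed.


Definition Sg (nv : V) (v : V) :=
  forall x, w (x + v + nv) - w (x + v) = w (x + nv) - w x.

Lemma Sg0 nv : Sg nv 0.
Proof. by move=> x; rewrite addr0. Qed.

Lemma SgD nv u v : Sg nv u -> Sg nv v -> Sg nv (u + v).
Proof. by move=> hu hv x; rewrite addrA hv hu. Qed.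

Lemma Sgm nv m a : Q m = 0 -> ip m nv != 0 -> Q nv = 0 -> Sg nv (a *: m).
Proof.
move=> hm hmn hn.
case: (eqVneq a 0) => [->|ha]; first by rewrite scale0r; exact: Sg0.
move=> x; rewrite Par //.
- by apply/rowP=> i; rewrite !mxE; ring.
- by rewrite QZ hm mulr0.
- by rewrite ipZl mulf_eq0 negb_or ha.
Qed.

Definition oth (i : 'I_D) : 'I_D := if i == o1 then o2 else o1.
Lemma oth0 i : oth i != ord0. Proof. by rewrite /oth; case: ifP. Qed.
Lemma othi i : (i == oth i) = false.
Proof. by rewrite /oth; case: ifP => [/eqP->|/negbT h] //. Qed.

Lemma pm1N (eps : R) : eps = 1 \/ eps = -1 -> - eps = 1 \/ - eps = -1.
Proof. by case=> ->; [right|left; rewrite opprK]. Qed.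

Lemma Sg_all i eps beta : i != ord0 -> (eps = 1 \/ eps = -1) ->
  forall v, Sg (beta *: nul i eps) v.
Proof.
move=> hi heps.
set nv := beta *: nul i eps.
case: (eqVneq beta 0) => [hb0|hb].
  by move=> v x; rewrite /nv hb0 scale0r !addr0 !subrr.
have hnv : Q nv = 0 by rewrite /nv QZ Q_nul // mulr0.
have ipn : forall j a, j != ord0 -> (a = 1 \/ a = -1) -> (i == j) = false ->
    ip (nul j a) nv != 0.
  move=> j a hj ha hij; rewrite /nv ipZr ip_nul // hij /= mulr0n mulr0 subr0 mulr1 //.
have He0 : forall a, Sg nv (a *: e ord0).
  move=> a.
  have -> : a *: e ord0 = (a / 2) *: nul (oth i) 1 + (a / 2) *: nul (oth i) (-1).
    by apply/rowP=> k; rewrite /nul /e !mxE; field.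
  apply: SgD; apply: Sgm => //; rewrite ?Q_nul ?oth0 //; try by [left|right].
    by apply: ipn; rewrite ?oth0 ?othi //; left.
  by apply: ipn; rewrite ?oth0 ?othi //; right.
apply: span_ind; [exact: Sg0 | exact: SgD | move=> a k].
case: (eqVneq k ord0) => [->|hk]; first exact: He0.
case: (eqVneq k i) => [->|hki].
  have -> : a *: e i = (eps * a) *: e ord0 + (- (eps * a)) *: nul i (- eps).
    by apply/rowP=> j; rewrite /nul /e !mxE; case: heps => ->; ring.
  apply: SgD; first exact: He0.
  apply: Sgm => //; first by apply: Q_nul => //; apply: pm1N.
  rewrite /nv ipZr ip_nul // eqxx /= mulr1n mulr1 mulf_eq0 negb_or hb /=.
  by case: heps => ->; rewrite ?opprK; apply/eqP; lra.
have -> : a *: e k = (a / 2) *: nul k 1 + (- (a / 2)) *: nul k (-1).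
  by apply/rowP=> j; rewrite /nul /e !mxE; field.
have hik : (i == k) = false by apply/negbTE; rewrite eq_sym.
by apply: SgD; apply: Sgm => //; rewrite ?Q_nul //; try (by left); try (by right);
  apply: ipn => //; [left|right].
Qed.

Definition Gd v := forall x, w (x + v) - w x = w v - w 0.

Lemma GdD u v : Gd u -> Gd v -> Gd (u + v).
Proof.
move=> hu hv x.
have h1 := hv (x + u); have h2 := hu x; have h3 := hv u.
rewrite addrA; apply/rowP=> i.
move/rowP: h1 => /(_ i); move/rowP: h2 => /(_ i); move/rowP: h3 => /(_ i).
rewrite !mxE => *; lra.
Qed.

Lemma Gd_all v : Gd v.
Proof.
have Gn : forall i eps beta, i != ord0 -> (eps = 1 \/ eps = -1) ->
    Gd (beta *: nul i eps).
  move=> i eps beta hi he x.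
  have := Sg_all beta hi he x 0.
  by rewrite !add0r.
apply: span_ind v.
- by move=> x; rewrite addr0 !subrr.
- exact: GdD.
move=> a k.
case: (eqVneq k ord0) => [->|hk].
  have -> : a *: e ord0 = (a / 2) *: nul o1 1 + (a / 2) *: nul o1 (-1).
    by apply/rowP=> j; rewrite /nul /e !mxE; field.
  by apply: GdD; apply: Gn => //; [left|right].
have -> : a *: e k = (a / 2) *: nul k 1 + (- (a / 2)) *: nul k (-1).
  by apply/rowP=> j; rewrite /nul /e !mxE; field.
by apply: GdD; apply: Gn => //; [left|right].
Qed.

Definition A v := w v - w 0.

Lemma AD u v : A (u + v) = A u + A v.
Proof.
have h := Gd_all v u; rewrite /A; apply/rowP=> i.
move/rowP: h => /(_ i); rewrite !mxE => *; lra.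
Qed.

Lemma wdiff p q : w p - w q = A (p - q).
Proof.
have h := Gd_all (p - q) q.
have E : q + (p - q) = p by rewrite addrC subrK.
by rewrite E in h; rewrite h.
Qed.


Lemma A0 : A 0 = 0. Proof. by rewrite /A subrr. Qed.
Lemma AN v : A (- v) = - A v.
Proof. by apply/eqP; rewrite -subr_eq0 opprK -AD addNr A0. Qed.
Lemma AB u v : A (u - v) = A u - A v.
Proof. by rewrite AD AN. Qed.
Lemma AMn v k : A (v *+ k) = A v *+ k.
Proof. elim: k => [|k IH]; first by rewrite !mulr0n A0. by rewrite !mulrS AD IH. Qed.
Lemma AZn (k : nat) v : A (k%:R *: v) = k%:R *: A v.
Proof. by rewrite !scaler_nat AMn. Qed.

Lemma Anull v : Q v = 0 <-> Q (A v) = 0.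
Proof.
have := wlam v 0; rewrite /lam subr0 -/(A v) => H; exact: H.
Qed.

Lemma Ainj u v : A u = A v -> u = v.
Proof. by rewrite /A => /(congr1 (fun x => x + w 0)); rewrite !subrK => /winj. Qed.

Lemma Asurj y : exists v, A v = y.
Proof. have [v hv] := wsurj (y + w 0); exists v; by rewrite /A hv addrK. Qed.

Definition E i := A (e i).
Definition cc := Q (E ord0).

Lemma Qe0 : Q (e ord0) = 1.
Proof. by rewrite /Q ipe eqxx eE eqxx. Qed.
Lemma Qei i : i != ord0 -> Q (e i) = -1.
Proof. by move=> hi; rewrite /Q ipe (negbTE hi) eE eqxx. Qed.
Lemma ipeij i j : i != j -> ip (e i) (e j) = 0.
Proof.
move=> hij; rewrite ipe eE; case: ifP => [/eqP hj|_].
  by subst j; rewrite eq_sym (negbTE hij).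
by rewrite eE eq_sym (negbTE hij) oppr0.
Qed.

Lemma cc0 : cc != 0.
Proof.
apply/eqP => h; have := (Anull (e ord0)).2 h; rewrite Qe0 => /eqP; by rewrite oner_eq0.
Qed.

Lemma Anul i : i != ord0 -> A (nul i 1) = E ord0 + E i /\ A (nul i (-1)) = E ord0 - E i.
Proof. by move=> hi; rewrite /nul scale1r scaleN1r AD AB. Qed.

Lemma Gram0 i : i != ord0 -> ip (E ord0) (E i) = 0 /\ Q (E i) = - cc.
Proof.
move=> hi; have [h1 h2] := Anul hi.
have q1 : Q (E ord0 + E i) = 0 by rewrite -h1; apply: (Anull _).1; apply: Q_nul => //; left.
have q2 : Q (E ord0 - E i) = 0 by rewrite -h2; apply: (Anull _).1; apply: Q_nul => //; right.
move: q1 q2; rewrite (QD (E ord0) (E i)) (QB (E ord0) (E i)) -/cc => q1 q2; split; lra.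
Qed.

Lemma Gram1 i j : i != ord0 -> j != ord0 -> i != j -> ip (E i) (E j) = 0.
Proof.
move=> hi hj hij.
have hv : Q (5%:R *: e ord0 + 3%:R *: e i + 4%:R *: e j) = 0.
  have h0i : ord0 != i by rewrite eq_sym.
  have h0j : ord0 != j by rewrite eq_sym.
  rewrite Q3 Qe0 (Qei hi) (Qei hj) (ipeij h0i) (ipeij h0j) (ipeij hij); ring.
move/Anull: hv; rewrite !AD !AZn -/(E ord0) -/(E i) -/(E j) Q3 -/cc.
have [g1 q1] := Gram0 hi; have [g2 q2] := Gram0 hj.
rewrite q1 q2 g1 g2 => H.
have : 2%:R * (3%:R * 4%:R) * ip (E i) (E j) = 0 by rewrite -H; ring.
by move/eqP; rewrite mulf_eq0 => /orP [/eqP H0|/eqP //]; exfalso; move: H0; lra.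
Qed.

Lemma Gram i j : ip (E i) (E j) = cc * ip (e i) (e j).
Proof.
case: (eqVneq i ord0) => [->|hi]; case: (eqVneq j ord0) => [->|hj].
- by rewrite -/(Q _) -/cc -/(Q (e _)) Qe0 mulr1.
- by rewrite (Gram0 hj).1 ipeij 1?eq_sym // mulr0.
- by rewrite ipC (Gram0 hi).1 ipeij // mulr0.
case: (eqVneq i j) => [<-|hij].
  by rewrite -/(Q _) (Gram0 hi).2 -/(Q (e _)) Qei // mulrN1.
by rewrite Gram1 // ipeij // mulr0.
Qed.


Lemma nul_neq0 k a : k != ord0 -> nul k a != 0.
Proof.
move=> hk; apply/negP => /eqP /rowP /(_ ord0).
rewrite /nul /e !mxE eqxx eq_sym (negbTE hk) /= mulr0 addr0 => /eqP.
by rewrite oner_eq0.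
Qed.

Lemma Aline m x : Q m = 0 -> m != 0 -> exists s, A (x *: m) = s *: A m.
Proof.
move=> hm m0.
have h1 : Q (A (x *: m)) = 0 by apply: (Anull _).1; rewrite QZ hm mulr0.
have h2 : Q (A m) = 0 := (Anull m).1 hm.
have h3 : Q (A (x *: m) - A m) = 0.
  rewrite -AB; apply: (Anull _).1.
  have -> : x *: m - m = (x - 1) *: m by rewrite scalerBl scale1r.
  by rewrite QZ hm mulr0.
have hip : ip (A (x *: m)) (A m) = 0.
  move: h3; rewrite (QB (A (x *: m)) (A m)) h1 h2 => H; lra.
have Am0 : A m != 0.
  by apply: contra m0 => /eqP h; apply/eqP; apply: Ainj; rewrite h A0.
exact: LL h1 h2 hip Am0.
Qed.

Definition sg x := ip (A (x *: e ord0)) (E ord0) / cc.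

Lemma Ascal_main x i : i != ord0 ->
  A (x *: e ord0) = sg x *: E ord0 /\ A (x *: e i) = sg x *: E i.
Proof.
move=> hi.
set j := oth i.
have hj : j != ord0 := oth0 i.
have hij : i != j by rewrite /j othi.
have [s1 hs1] := Aline (x / 2) (Q_nul hi (or_introl erefl)) (nul_neq0 1 hi).
have [t1 ht1] := Aline (x / 2) (Q_nul hi (or_intror erefl)) (nul_neq0 (-1) hi).
have [s2 hs2] := Aline (x / 2) (Q_nul hj (or_introl erefl)) (nul_neq0 1 hj).
have [t2 ht2] := Aline (x / 2) (Q_nul hj (or_intror erefl)) (nul_neq0 (-1) hj).
have [ai bi] := Anul hi; have [aj bj] := Anul hj.
have sumI : A (x *: e ord0) = A ((x / 2) *: nul i 1) + A ((x / 2) *: nul i (-1)).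
  by rewrite -AD; congr A; apply/rowP=> k; rewrite /nul /e !mxE; field.
have sumJ : A (x *: e ord0) = A ((x / 2) *: nul j 1) + A ((x / 2) *: nul j (-1)).
  by rewrite -AD; congr A; apply/rowP=> k; rewrite /nul /e !mxE; field.
have difI : A (x *: e i) = A ((x / 2) *: nul i 1) - A ((x / 2) *: nul i (-1)).
  by rewrite -AB; congr A; apply/rowP=> k; rewrite /nul /e !mxE; field.
rewrite hs1 ht1 ai bi in sumI; rewrite hs2 ht2 aj bj in sumJ.
have HH := congr1 (fun v => ip v (E i)) (etrans (esym sumI) sumJ).
rewrite /sg difI hs1 ht1 ai bi sumI.
have [g0i qi] := Gram0 hi; have [g0j qj] := Gram0 hj.
have gij : ip (E j) (E i) = 0 by apply: Gram1 => //; rewrite eq_sym.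
have c0 := cc0.
move: HH g0i qi g0j qj gij c0; rewrite /cc /=.
move: (E ord0) (E i) (E j) => E0 Ei Ej HH g0i qi g0j qj gij c0.
rewrite !(ipDl, ipZl, ipNl) -/(Q Ei) in HH.
rewrite qi g0i gij in HH.
have Hst : t1 = s1.
  have : (t1 - s1) * Q E0 = 0 by move: HH => /= H; lra.
  by move/eqP; rewrite mulf_eq0 (negbTE c0) orbF subr_eq0 => /eqP.
subst t1.
have -> : s1 *: (E0 + Ei) + s1 *: (E0 - Ei) = (2 * s1) *: E0.
  by apply/rowP=> k; rewrite !mxE; ring.
rewrite ipZl -/(Q E0) mulfK //.
split => //; by apply/rowP=> k; rewrite !mxE; ring.
Qed.


Lemma Ascal x i : A (x *: e i) = sg x *: E i.
Proof.
case: (eqVneq i ord0) => [->|hi]; last exact: (Ascal_main x hi).2.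
exact: (Ascal_main x (isT : o1 != ord0)).1.
Qed.

Lemma sgD a b : sg (a + b) = sg a + sg b.
Proof. by rewrite /sg scalerDl AD ipDl mulrDl. Qed.
Lemma sg0 : sg 0 = 0.
Proof. by rewrite /sg scale0r A0 ip0l mul0r. Qed.
Lemma sgN a : sg (- a) = - sg a.
Proof. by apply/eqP; rewrite -subr_eq0 opprK -sgD addNr sg0. Qed.
Lemma sgB a b : sg (a - b) = sg a - sg b.
Proof. by rewrite sgD sgN. Qed.
Lemma sg1 : sg 1 = 1.
Proof. by rewrite /sg scale1r -/(E ord0) -/(Q _) -/cc divff // cc0. Qed.
Lemma sgMn a k : sg (a *+ k) = sg a *+ k.
Proof. elim: k => [|k IH]; first by rewrite !mulr0n sg0. by rewrite !mulrS sgD IH. Qed.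

Lemma sgsq x : sg (x * x) = sg x * sg x.
Proof.
set v := (x * x + 1) *: e ord0 + (x * x - 1) *: e o1 + (2 * x) *: e o2.
have h1 : o1 != ord0 by []. have h2 : o2 != ord0 by []. have h12 : o1 != o2 by [].
have hv : Q v = 0.
  rewrite /v Q3 Qe0 (Qei h1) (Qei h2) (ipeij (isT : ord0 != o1))
    (ipeij (isT : ord0 != o2)) (ipeij h12); ring.
move/Anull: hv; rewrite /v !AD !Ascal Q3.
have [g1 q1] := Gram0 h1; have [g2 q2] := Gram0 h2.
have g12 := Gram1 h1 h2 h12.
rewrite q1 q2 g1 g2 g12 -/cc !sgD sgN sg1.
have -> : sg (2 * x) = 2 * sg x by rewrite mulr2n mulrDl mul1r sgD -mulr2n mulrDl mul1r.
move=> H.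
have : cc * (sg (x * x) - sg x * sg x) = 0 by lra.
by move/eqP; rewrite mulf_eq0 (negbTE cc0) /= subr_eq0 => /eqP.
Qed.

Lemma sgM a b : sg (a * b) = sg a * sg b.
Proof.
have h := sgsq (a + b).
rewrite mulrDl !mulrDr !sgD !sgsq (mulrC b a) in h.
have : sg (a * b) *+ 2 = (sg a * sg b) *+ 2 by rewrite !mulr2n; lra.
move/eqP; rewrite -mulr_natr -[X in _ == X]mulr_natr.
by move/eqP/mulIf; apply; rewrite pnatr_eq0.
Qed.

Lemma AE v : A v = \sum_i sg (v 0 i) *: E i.
Proof.
rewrite {1}(row_sum_delta v).
rewrite (big_morph A AD A0).
by apply: eq_bigr => i _; rewrite Ascal.
Qed.

Lemma ip_sumL (I : finType) (F : I -> V) y : ip (\sum_i F i) y = \sum_i ip (F i) y.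
Proof. by rewrite (big_morph (fun u => ip u y) (fun u v => ipDl u v y) (ip0l y)). Qed.
Lemma ip_sumR (I : finType) (F : I -> V) y : ip y (\sum_i F i) = \sum_i ip y (F i).
Proof. by rewrite (big_morph (fun u => ip y u) (fun u v => ipDr u v y) (ip0r y)). Qed.

Lemma ipAA u v : ip (A u) (A v) = cc * ip (map_mx sg u) (map_mx sg v).
Proof.
rewrite !AE (row_sum_delta (map_mx sg u)) (row_sum_delta (map_mx sg v)).
rewrite !ip_sumL mulr_sumr; apply: eq_bigr => i _.
rewrite !ip_sumR mulr_sumr; apply: eq_bigr => j _.
rewrite !ipZl !ipZr Gram !mxE -/(e i) -/(e j); ring.
Qed.

Lemma sg_sum (I : finType) (P : pred I) (F : I -> R) :
  sg (\sum_(i | P i) F i) = \sum_(i | P i) sg (F i).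
Proof. exact: (big_morph sg sgD sg0). Qed.

Lemma QA v : Q (A v) = cc * sg (Q v).
Proof.
rewrite /Q ipAA; congr (_ * _).
rewrite /ip sgB sgM sg_sum !mxE; congr (_ - _).
by apply: eq_bigr => i _; rewrite !mxE sgM.
Qed.

Hypothesis wS : forall p q : V, p 0 ord0 = q 0 ord0 -> w p 0 ord0 = w q 0 ord0 ->
  Q (w p - w q) = Q (p - q).
Hypothesis EOF : forall x : R, 0 < x -> exists y, y * y = x.

Lemma map_sg_e j : map_mx sg (e j) = e j.
Proof.
apply/rowP=> k; rewrite !mxE eqxx /=.
by case: (k == j); rewrite /= ?mulr1n ?mulr0n ?sg1 ?sg0.
Qed.

Lemma sg_surj r : exists y, sg y = r.
Proof.
have [v hv] := Asurj (r *: E o1).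
exists (v 0 o1).
have := ipAA v (e o1).
rewrite hv -/(E o1) map_sg_e ipe /= ipZl -/(Q (E o1)) (Gram0 (isT : o1 != ord0)).2 mxE.
move=> H.
have : cc * (sg (v 0 o1) - r) = 0 by lra.
by move/eqP; rewrite mulf_eq0 (negbTE cc0) /= subr_eq0 => /eqP.
Qed.

Lemma Aiso v : Q (A v) = Q v.
Proof.
have [u [hu0 hut hq]] : exists u : V, [/\ u 0 ord0 = 0,
    forall k, A (k *: u) 0 ord0 = 0 & Q u != 0].
  case: (eqVneq (E o2 0 ord0) 0) => ha2.
    exists (e o2); split.
    - by rewrite eE.
    - by move=> k; rewrite Ascal mxE ha2 mulr0.
    - by rewrite Qei // oppr_eq0 oner_eq0.
  have [y hy] := sg_surj (- E o1 0 ord0 / E o2 0 ord0).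
  exists (e o1 + y *: e o2); split.
  - by rewrite !mxE /= !mulr0n mulr0 addr0.
  - move=> k; rewrite scalerDr scalerA AD !Ascal sgM hy !mxE.
    by move: ha2; rewrite /E /A !mxE => ha2; field.
  - rewrite -[e o1]scale1r Q2 (Qei (isT : o1 != ord0)) (Qei (isT : o2 != ord0)).
    rewrite (ipeij (isT : o1 != o2)).
    have := sqr_ge0 y => hy2.
    apply/eqP => H; lra.
have hk : forall k, cc * sg (k * k * Q u) = k * k * Q u.
  move=> k.
  have : Q (A (k *: u)) = Q (k *: u).
    have := wS (p := k *: u) (q := 0).
    rewrite subr0 -/(A _).
    apply; first by rewrite !mxE hu0 mulr0.
    by apply/eqP; rewrite -subr_eq0; have := hut k; rewrite /A !mxE => ->.
  by rewrite QA QZ expr2.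
have hc1 : cc * sg (Q u) = Q u by have := hk 1; rewrite !mul1r.
have sqk : forall k, sg (k * k) = k * k.
  move=> k; have := hk k; rewrite !sgM mulrCA hc1 => /eqP.
  by rewrite -subr_eq0 -mulrBl mulf_eq0 (negbTE hq) orbF subr_eq0 => /eqP.
have sgid : forall x, sg x = x.
  move=> x; case: (ltrgt0P x) => hx.
  - by have [y <-] := EOF hx; rewrite sqk.
  - have hx' : 0 < - x by rewrite oppr_gt0.
    have [y hy] := EOF hx'.
    by apply: oppr_inj; rewrite -sgN -hy sqk.
  - by rewrite hx sg0.
have hcc : cc = 1.
  move: hc1; rewrite sgid => /eqP; rewrite -subr_eq0 -[X in _ - X]mul1r -mulrBl.
  by rewrite mulf_eq0 (negbTE hq) orbF subr_eq0 => /eqP.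
by rewrite QA sgid hcc mul1r.
Qed.

Lemma w_iso p q : Q (w p - w q) = Q (p - q).
Proof. by rewrite wdiff Aiso. Qed.
End Wmap.
End Mink.

Section Model.
Variables (R : realFieldType) (n : nat) (B : Type)
  (Ob IOb Ph : B -> Prop) (W : B -> B -> 'rV[R]_(n.+3) -> Prop).
Local Notation D := n.+3.
Local Notation V := 'rV[R]_D.
Hypothesis EOF : forall x : R, 0 < x -> exists y, y * y = x.

Lemma tcompE (p : V) : tcomp p = p 0 ord0.
Proof. by rewrite /tcomp (big_pred1 ord0). Qed.

Lemma esqrtP (x : R) : 0 <= x -> 0 <= esqrt x /\ esqrt x * esqrt x = x.
Proof.
move=> hx; rewrite /esqrt.
apply: (epsilon_spec (inhabits 0) (fun y : R => 0 <= y /\ y * y = x)).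
case: (ltrgt0P x) => h.
- have [y hy] := EOF h; exists `|y|; split => //.
  by rewrite -normrM hy ger0_norm.
- by move: hx; rewrite leNgt h.
- by exists 0; rewrite h mul0r.
Qed.

Lemma Ssum (p q : V) : \sum_(i < D | val i != 0%N) (p 0 i - q 0 i) ^+ 2 =
  \sum_(i | i != ord0) (p - q) 0 i * (p - q) 0 i.
Proof. by apply: eq_bigr => i _; rewrite !mxE expr2. Qed.

Lemma Ssum_ge0 (p q : V) : 0 <= \sum_(i < D | val i != 0%N) (p 0 i - q 0 i) ^+ 2.
Proof. by apply: sumr_ge0 => i _; rewrite sqr_ge0. Qed.

Lemma sdist2 (p q : V) : sdist p q ^+ 2 = \sum_(i | i != ord0) (p - q) 0 i * (p - q) 0 i.
Proof. by rewrite /sdist -Ssum expr2; have [_ ->] := esqrtP (Ssum_ge0 p q). Qed.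

Lemma interval (p q : V) : tdist p q ^+ 2 - sdist p q ^+ 2 = Q (p - q).
Proof.
rewrite sdist2 /tdist !tcompE real_normK ?num_real // /Q /ip !mxE expr2.
by congr (_ - _); apply: eq_bigr => i _; rewrite !mxE.
Qed.

Lemma lamE (p q : V) : sdist p q = tdist p q <-> lam p q.
Proof.
rewrite /lam -interval; split => [->|H]; first by rewrite subrr.
have hs : 0 <= sdist p q by rewrite /sdist; have [] := esqrtP (Ssum_ge0 p q).
have ht : 0 <= tdist p q by rewrite /tdist normr_ge0.
apply/eqP; rewrite -(eqrXn2 (isT : (0 < 2)%N) hs ht).
by rewrite eq_sym -subr_eq0; apply/eqP.
Qed.

Hypothesis SR : SpecRel Ob IOb Ph W.

Lemma ph0 m : IOb m -> forall p q : V,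
  lam p q <-> exists b, [/\ Ph b, W m b p & W m b q].
Proof.
move=> hm p q; case: SR => _ _ _ hph _; rewrite -lamE; exact: hph.
Qed.

Lemma Cd_all m : IOb m -> forall p : V, Cd W m p.
Proof.
move=> hm p; have hl : lam p p by rewrite /lam subrr /Q ip0l.
have [b [_ hb _]] := (ph0 hm p p).1 hl.
by exists b.
Qed.

Lemma ev_inj m : IOb m -> forall p q : V, ev W m p = ev W m q -> p = q.
Proof.
move=> hm p q he.
have tr : forall r, lam r p -> lam r q.
  move=> r hr; have [b [hb h1 h2]] := (ph0 hm r p).1 hr.
  apply/(ph0 hm r q); exists b; split => //.
  by have := congr1 (fun f => f b) he; rewrite /ev => <-.
apply/eqP/negPn/negP => hpq.
set v := q - p.
have v0 : v != 0 by rewrite /v subr_eq0 eq_sym.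
case: (eqVneq (Q v) 0) => hv.
  have hv0 : v 0 ord0 != 0 by apply: contra v0 => /eqP h; apply/eqP; exact: null_t0.
  have hsum : ip (nul (o1 n) 1) v + ip (nul (o1 n) (-1)) v = 2 * v 0 ord0.
    by rewrite /nul !ipDl !ipZl ipC ipe eqxx; ring.
  have [nn [hn hnv]] : exists nn, Q nn = 0 /\ ip nn v != 0.
    case: (eqVneq (ip (nul (o1 n) 1) v) 0) => h1.
      exists (nul (o1 n) (-1)); split; first by apply: Q_nul => //; right.
      apply/eqP => h2; move: hsum; rewrite h1 h2 addr0 => /eqP.
      by rewrite eq_sym mulf_eq0 (negbTE hv0) pnatr_eq0.
    by exists (nul (o1 n) 1); split => //; apply: Q_nul => //; left.
  have := tr (p + nn).
  rewrite /lam.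
  have -> : p + nn - p = nn by rewrite addrC addKr.
  move=> /(_ hn).
  have -> : p + nn - q = nn - v by rewrite /v opprB addrA addrC addrA (addrC (-q)) ; apply/rowP=> i; rewrite !mxE; ring.
  rewrite QB hn hv => H.
  by move/eqP: hnv; apply; lra.
have := tr p; rewrite /lam subrr /Q ip0l => /(_ erefl).
move=> H; move/eqP: hv; apply; rewrite /v -QN opprB; exact: H.
Qed.

Section Two.
Variables m k : B.
Hypotheses (hm : IOb m) (hk : IOb k).

Definition wmk (p : V) : V := epsilon (inhabits 0) (fun q => ev W k q = ev W m p).

Lemma wmkP p : ev W k (wmk p) = ev W m p.
Proof.
rewrite /wmk; apply: (epsilon_spec (inhabits 0) (fun q : V => ev W k q = ev W m p)).
case: SR => _ _ _ _ [hev _].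
have : InEv W m (ev W m p) by exists p => //; exact: Cd_all.
by move/(hev m k hm hk) => [q _ hq]; exists q.
Qed.

Lemma wmk_inj : injective wmk.
Proof. by move=> p q h; apply: (ev_inj hm); rewrite -!wmkP h. Qed.

Lemma wmk_surj y : exists x, wmk x = y.
Proof.
case: SR => _ _ _ _ [hev _].
have : InEv W k (ev W k y) by exists y => //; exact: Cd_all.
move/(hev m k hm hk) => [p _ hp]; exists p.
by apply: (ev_inj hk); rewrite wmkP.
Qed.

Lemma wmk_lam p q : lam p q <-> lam (wmk p) (wmk q).
Proof.
have E : forall b x, W m b x <-> W k b (wmk x).
  by move=> b x; have := congr1 (fun f => f b) (wmkP x); rewrite /ev => ->.
split => [/(ph0 hm) [b [h0 h1 h2]] | /(ph0 hk) [b [h0 h1 h2]]].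
  by apply/(ph0 hk); exists b; split => //; apply/E.
by apply/(ph0 hm); exists b; split => //; apply/E.
Qed.

Lemma IsCrd_m p : IsCrd W m (ev W m p) p.
Proof. split => //; first exact: Cd_all. by move=> q _ /(ev_inj hm). Qed.

Lemma IsCrd_k p : IsCrd W k (ev W m p) (wmk p).
Proof.
split; first exact: Cd_all.
- exact: wmkP.
- by move=> q _; rewrite -wmkP => /(ev_inj hk).
Qed.

Lemma wmk_S (p q : V) : p 0 ord0 = q 0 ord0 -> wmk p 0 ord0 = wmk q 0 ord0 ->
  Q (wmk p - wmk q) = Q (p - q).
Proof.
move=> h1 h2.
case: SR => _ _ _ _ [_ hsd].
have hd := hsd m k hm hk (ev W m p) (ev W m q)
   (ex_intro2 _ _ p (Cd_all hm p) erefl) (ex_intro2 _ _ q (Cd_all hm q) erefl)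
   p q (wmk p) (wmk q) (IsCrd_m p) (IsCrd_m q) (IsCrd_k p) (IsCrd_k q).
rewrite !tcompE in hd; have {}hd := hd h1 h2.
rewrite -!interval hd /tdist !tcompE h1 h2.
by rewrite !subrr normr0.
Qed.

End Two.
End Model.

Unset Implicit Arguments.

Theorem mainTheorem1 (R : realFieldType) (d : nat) (B : Type)
  (Ob IOb Ph : B -> Prop) (W : B -> B -> 'rV[R]_d -> Prop) :
  (3 <= d)%N -> SpecRel Ob IOb Ph W ->
  forall m k : B, IOb m -> IOb k ->
  forall e1 e2 : B -> Prop, InEv W m e1 -> InEv W m e2 ->
  exists p1 p2 q1 q2 : 'rV[R]_d,
    [/\ IsCrd W m e1 p1, IsCrd W m e2 p2, IsCrd W k e1 q1, IsCrd W k e2 q2 &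
      tdist p1 p2 ^+ 2 - sdist p1 p2 ^+ 2 = tdist q1 q2 ^+ 2 - sdist q1 q2 ^+ 2].
Proof.
case: d W => [|[|[|n]]] W //= _ SR m k hm hk e1 e2 [p1 _ <-] [p2 _ <-].
have EOF : forall x : R, 0 < x -> exists y, y * y = x by case: SR.
exists p1, p2, (wmk W m k p1), (wmk W m k p2); split.
- exact: (IsCrd_m EOF SR hm).
- exact: (IsCrd_m EOF SR hm).
- exact: (IsCrd_k EOF SR hm hk).
- exact: (IsCrd_k EOF SR hm hk).
rewrite !(interval EOF).
symmetry; apply: (w_iso (wmk_lam EOF SR hm hk) (wmk_surj EOF SR hm hk)
  (wmk_inj EOF SR hm hk) (wmk_S EOF SR hm hk) EOF).
Qed.
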